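(* Let $R>0$, let $I\subset\mathbb{R}$ be an open interval and let $x,y\colon I\to\mathbb{R}$ be continuously differentiable with $r(t):=\sqrt{x(t)^2+y(t)^2}>R$ and $|x(t)-t|<r(t)-R$ for all $t\in I$. Put $g(t)=\dfrac{x(t)-t}{r(t)-R}$. Then for each $t\in I$ the compatibility condition $$\frac{d}{dt}\left(y(t)+\sqrt{\big(r(t)-R\big)^2-(x(t)-t)^2}\right)=\frac{x(t)-t}{\sqrt{\big(r(t)-R\big)^2-(x(t)-t)^2}}$$ holds if and only if $$\left(g(t)-\frac{x(t)}{r(t)}\right)x'(t)=\left(\sqrt{1-g(t)^2}+\frac{y(t)}{r(t)}\right)y'(t).$$
   Context: In the paper this is applied to the equidistant parameterization $x,y$ of a circle of radius $R$ centered at the origin and the epigraph of a positive, twice continuously differentiable convex function $f$, for which $f(t)=y(t)+\sqrt{(r(t)-R)^2-(x(t)-t)^2}$ and $f'(t)=(x(t)-t)/\sqrt{(r(t)-R)^2-(x(t)-t)^2}$; the compatibility condition expresses that the derivative of the first expression equals the second. *)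

(* Defs.v *)
From Stdlib Require Import Reals.
From Coquelicot Require Import Coquelicot.
Open Scope R_scope.

Definition in_open_interval (a b : Rbar) (t : R) : Prop :=
  Rbar_lt a t /\ Rbar_lt t b.

Definition C1_on (a b : Rbar) (f df : R -> R) : Prop :=
  forall t, in_open_interval a b t -> is_derive f t (df t) /\ continuous df t.

(* Main.v *)
Require Import Defs.
From Stdlib Require Import Reals Lra.
From Coquelicot Require Import Coquelicot.
Open Scope R_scope.

Theorem theorem6 (R0 : R) (a b : Rbar) (x y dx dy : R -> R) :
  0 < R0 ->
  Rbar_lt a b ->
  C1_on a b x dx ->
  C1_on a b y dy ->
  (forall t, in_open_interval a b t ->
     sqrt (x t ^ 2 + y t ^ 2) > R0 /\
     Rabs (x t - t) < sqrt (x t ^ 2 + y t ^ 2) - R0) ->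
  forall t, in_open_interval a b t ->
    let r := fun s => sqrt (x s ^ 2 + y s ^ 2) in
    let g := fun s => (x s - s) / (r s - R0) in
    (is_derive (fun s => y s + sqrt ((r s - R0) ^ 2 - (x s - s) ^ 2)) t
        ((x t - t) / sqrt ((r t - R0) ^ 2 - (x t - t) ^ 2))
     <->
     (g t - x t / r t) * dx t = (sqrt (1 - g t ^ 2) + y t / r t) * dy t).
Proof.
  intros HR0 _ Hx Hy Hc t Ht r g.
  destruct (Hx t Ht) as [Dx _]. destruct (Hy t Ht) as [Dy _].
  destruct (Hc t Ht) as [Hr Habs].
  unfold g, r in *; clear g r.
  set (u := x t) in *. set (v := y t) in *.
  set (rho := sqrt (u ^ 2 + v ^ 2)) in *.
  assert (Huv : 0 < u ^ 2 + v ^ 2).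
  { destruct (Rle_lt_dec (u^2+v^2) 0) as [Hle|]; [|lra].
    unfold rho in Hr. rewrite sqrt_neg_0 in Hr; lra. }
  assert (Hrho2 : rho * rho = u^2 + v^2) by (apply sqrt_sqrt; lra).
  set (c := rho - R0).
  assert (Hc0 : 0 < c) by (unfold c; lra).
  assert (HS : 0 < c ^ 2 - (u - t) ^ 2).
  { apply Rabs_def2 in Habs. fold c in Habs. nra. }
  set (q := sqrt (c ^ 2 - (u - t) ^ 2)).
  assert (Hq : 0 < q) by (apply sqrt_lt_R0; lra).
  assert (Hq2 : q * q = c ^ 2 - (u - t) ^ 2) by (apply sqrt_sqrt; lra).
  assert (Hgq : sqrt (1 - ((u - t) / c) ^ 2) = q / c).
  { replace (1 - ((u - t) / c) ^ 2) with ((q / c) ^ 2).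
    - apply sqrt_pow2. apply Rlt_le, Rdiv_lt_0_compat; lra.
    - replace ((q / c) ^ 2) with ((q * q) / (c ^ 2)) by (field; lra).
      rewrite Hq2. field; lra. }
  rewrite Hgq.
  set (D := dy t + (c * ((u * dx t + v * dy t) / rho) - (u - t) * (dx t - 1)) / q).
  assert (HD : is_derive (fun s => y s + sqrt ((sqrt (x s ^ 2 + y s ^ 2) - R0) ^ 2 - (x s - s) ^ 2)) t D).
  { auto_derive.
    - repeat split; try (eexists; eassumption).
      + fold u v. replace (u * (u * 1) + v * (v * 1)) with (u^2+v^2) by ring. lra.
      + fold u v. replace (u * (u * 1) + v * (v * 1)) with (u^2+v^2) by ring.
        fold rho.
        replace ((rho + - R0) * ((rho + - R0) * 1) + - ((u + - t) * ((u + - t) * 1))) with (c^2-(u-t)^2) by (unfold c; ring). lra.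
    - change (fun x0 => y x0) with y. change (fun x0 => x x0) with x.
      rewrite (is_derive_unique _ _ _ Dx), (is_derive_unique _ _ _ Dy).
      fold u v. replace (u * (u * 1) + v * (v * 1)) with (u^2+v^2) by ring.
      fold rho. replace (rho + - R0) with c by (unfold c; ring).
      replace (c * (c * 1) + - ((u + - t) * ((u + - t) * 1))) with (c ^ 2 - (u - t) ^ 2) by ring.
      fold q. unfold D. field. split; lra. }
  fold c q.
  assert (Hrho : 0 < rho) by lra.
  set (E := dy t * q + c * (u * dx t + v * dy t) / rho - (u - t) * dx t).
  assert (H1 : (u - t) / q - D = - E / q) by (unfold D, E; field; split; lra).
  assert (H2 : ((u - t) / c - u / rho) * dx t - (q / c + v / rho) * dy t = - E / c)
    by (unfold E; field; split; lra).
  split.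
  - intro H. assert (HL : (u - t) / q = D) by (rewrite <- (is_derive_unique _ _ _ H); exact (is_derive_unique _ _ _ HD)).
    assert (E = 0).
    { rewrite HL in H1. replace (D - D) with 0 in H1 by ring.
      assert (- E = 0 * q) by (rewrite H1; field; lra). lra. }
    rewrite H0 in H2. replace (-0 / c) with 0 in H2 by (field; lra). lra.
  - intro H. assert (E = 0).
    { assert (HH : - E / c = 0) by lra.
      assert (- E = 0 * c) by (rewrite <- HH; field; lra). lra. }
    rewrite H0 in H1. replace (-0 / q) with 0 in H1 by (field; lra).
    replace ((u - t) / q) with D by lra. exact HD.
Qed.
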